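(* Let $\Gamma$ be finite. For every directed edge $\epsilon\in\vec E$, as operators on $\mathcal H$, $$[\ell(\epsilon),JX_\epsilon J]=-\frac{1}{\sqrt[4]{\mu(s(\epsilon))^3\mu(t(\epsilon))}}\,|s(\epsilon)\rangle\langle t(\epsilon)|,$$ and $[\ell(\epsilon),JX_{\epsilon'}J]=0$ whenever $\epsilon'\in\vec E$, $\epsilon'\neq\epsilon$.
   Context: $\Gamma$ is a finite connected undirected graph (loops, multiple edges allowed), vertex set $V$, weighting $\mu:V\to(0,\infty)$. Directed version $\vec\Gamma$: each edge with distinct endpoints $\alpha\ne\beta$ yields $\epsilon,\epsilon^{op}$ with $s(\epsilon)=t(\epsilon^{op})=\alpha$, $t(\epsilon)=s(\epsilon^{op})=\beta$; each loop yields one directed loop $\epsilon=\epsilon^{op}$. $\mathcal C=C_0(V)$, $p_\alpha$ indicator of $\alpha$; $\mathcal X$ the Hilbert $\mathcal C$-$\mathcal C$ bimodule spanned by directed edges with $p_\alpha\epsilon=\delta_{s(\epsilon),\alpha}\epsilon$, $\epsilon p_\alpha=\delta_{t(\epsilon),\alpha}\epsilon$, $\langle\epsilon'|\epsilon\rangle=\delta_{\epsilon,\epsilon'}p_{t(\epsilon)}$; $\mathcal F(\mathcal X)$ its full Fock space with creation operators $\ell(\xi)$. For a loop $e$: $X_e=\ell(\epsilon)+\ell(\epsilon)^*$; for $e$ with endpoints $\alpha\ne\beta$: $a_\epsilon=(\mu(\alpha)/\mu(\beta))^{1/4}$, $X_e=a_\epsilon\ell(\epsilon)+a_\epsilon^{-1}\ell(\epsilon^{op})^*+a_\epsilon^{-1}\ell(\epsilon^{op})+a_\epsilon\ell(\epsilon)^*$;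 $X_\epsilon=p_{s(\epsilon)}X_ep_{t(\epsilon)}$. $\mathcal S(\Gamma,\mu)$ is the C$^*$-algebra generated by $\mathcal C$ and the $X_e$; $\mathrm{Tr}=\mathrm{tr}\circ E$ with $E(x)=PxP$, $\mathrm{tr}(p_v)=\mu(v)$. $\mathcal H=L^2(\mathcal S(\Gamma,\mu),\mathrm{Tr})\cong\mathcal F(\mathcal X)\otimes_{\mathcal C}\ell^2(V,\mu)$, with inner product linear in the right variable. $\mathcal H$ has an orthogonal spanning set consisting of the vertices $\gamma\in V$ (the vectors $\widehat{p_\gamma}$, paths of length 0) and the paths $\epsilon_1\cdots\epsilon_n$ in $\vec\Gamma$ ($t(\epsilon_k)=s(\epsilon_{k+1})$), with $\|\gamma\|=\sqrt{\mu(\gamma)}$, $\|\epsilon_1\cdots\epsilon_n\|=\sqrt{\mu(t(\epsilon_n))}$. The operator $\ell(\epsilon)$ acts by $\ell(\epsilon)\gamma=\delta_{t(\epsilon),\gamma}\epsilon$ and $\ell(\epsilon)(\epsilon_1\cdots\epsilon_n)=\epsilon\epsilon_1\cdots\epsilon_n$ if $t(\epsilon)=s(\epsilon_1)$ and $0$ otherwise; $\mathcal S(\Gamma,\mu)$ acts on $\mathcal H$ by left multiplication. $J$ is the modular conjugation, the antilinear isometry extending $\hat x\mapsto\widehat{x^*}$; concretely $J\gamma=\gamma$ and $J(\epsilon_1\cdots\epsilon_n)=\sqrt{\mu(t(\epsilon_n))/\mu(s(\epsilon_1))}\,\epsilon_n^{op}\cdots\epsilon_1^{op}$. For $\xi,\eta\in\mathcal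 H$, $|\xi\rangle\langle\eta|$ is the rank-one operator $\zeta\mapsto\xi\langle\eta|\zeta\rangle_{\mathcal H}$; vertices $s(\epsilon),t(\epsilon)$ are regarded as vectors in $\mathcal H$. *)

(* Defs.v *)
From mathcomp Require Import all_boot all_algebra.
From mathcomp Require Import reals complex.
Set Implicit Arguments. Unset Strict Implicit. Unset Printing Implicit Defensive.
Import GRing.Theory Num.Theory.
Local Open Scope ring_scope.
Local Open Scope complex_scope.

(* Graph data.  A finite graph Gamma is given by its DIRECTED version:         *)
(*   V : finType (vertices), E : finType (directed edges, the set \vec E),      *)
(*   s t : E -> V (source / target), op : E -> E (eps |-> eps^op),              *)
(* with op involutive, s (op e) = t e, t (op e) = s e, and op e = e exactly    *)
(* for the (single) directed loop coming from a loop of Gamma (these are       *)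
(* hypotheses of the theorem).  mu : V -> R is the weighting, R : realType,    *)
(* and the scalars are C = R[i].                                              *)
(* The Hilbert space H = F(X) (x)_C l^2(V,mu) has the orthogonal spanning set  *)
(* [basis] = vertices (paths of length 0) + nonempty paths eps_1..eps_n with   *)
(* t(eps_k) = s(eps_(k+1)); ||gamma||^2 = mu gamma, ||eps_1..eps_n||^2 =      *)
(* mu (t eps_n).  A vector xi = sum_b f b * b is represented by its            *)
(* coefficient function  f : basis -> C, and operators act on these.          *)

Section Fock.
Variables (R : realType) (V E : finType) (s t : E -> V) (op : E -> E)
          (mu : V -> R).

Local Notation C := R[i].

Definition is_pathw (w : seq E) : bool := sorted (fun e1 e2 => t e1 == s e2) w.

Definition paths := {p : E * seq E | is_pathw (p.1 :: p.2)}.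

Definition basis := (V + paths)%type.

Definition vec := basis -> C.
Definition oper := vec -> vec.

Definition bstart (b : basis) : V :=
  match b with inl v => v | inr p => s (val p).1 end.
Definition bend (b : basis) : V :=
  match b with inl v => v | inr p => t (last (val p).1 (val p).2) end.

Definition norm2 (b : basis) : R := mu (bend b).

Definition coefP (f : vec) (w : seq E) : C :=
  if w is e :: r then (if insub (e, r) is Some q then f (inr q) else 0) else 0.

Definition coefW (f : vec) (v : V) (w : seq E) : C :=
  if w is [::] then f (inl v) else coefP f w.

Definition bvec (b : basis) : vec := fun c => if c == b then 1 else 0.

(* <b | zeta>_H for a basis vector b (inner product linear in the right     *)
(* variable, the spanning set being orthogonal)                             *)
Definition inner_basis (b : basis) (zeta : vec) : C := (norm2 b)%:C * zeta b.

(* rank-one operator |xi><b| : zeta |-> xi <b|zeta> *)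
Definition rank1 (xi : vec) (b : basis) : oper :=
  fun zeta c => xi c * inner_basis b zeta.

(* creation operator l(eps): l(eps) gamma = delta_{t eps, gamma} eps,
   l(eps) (eps_1..eps_n) = eps eps_1 .. eps_n (0 if t eps <> s eps_1).
   In coefficients: (l(eps) f)(eps w) = coef of w (w empty = vertex t eps). *)
Definition lcr (eps : E) : oper := fun f b =>
  match b with
  | inl _ => 0
  | inr p => if (val p).1 == eps then coefW f (t eps) (val p).2 else 0
  end.

(* its adjoint l(eps)^* : eps w |-> w, eps |-> t(eps), other basis vectors |-> 0 *)
Definition lann (eps : E) : oper := fun f b =>
  match b with
  | inl v => if v == t eps then coefP f [:: eps] else 0
  | inr p => coefP f (eps :: (val p).1 :: (val p).2)
  end.

Definition pl (alpha : V) : oper := fun f b =>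
  if bstart b == alpha then f b else 0.

Definition oadd (A B : oper) : oper := fun f b => A f b + B f b.
Definition oscale (c : C) (A : oper) : oper := fun f b => c * A f b.
Definition ocomp (A B : oper) : oper := fun f => A (B f).
Definition comm (A B : oper) : oper := fun f b => A (B f) b - B (A f) b.

Definition root4 (x : R) : R := Num.sqrt (Num.sqrt x).

Definition a_coef (eps : E) : R := root4 (mu (s eps) / mu (t eps)).

(* X_e for the (undirected) edge e underlying eps (the formula is symmetric
   under eps <-> eps^op since a_(eps^op) = a_eps^-1) *)
Definition Xe (eps : E) : oper :=
  if op eps == eps then oadd (lcr eps) (lann eps)
  else
    let a := (a_coef eps)%:C in
    oadd (oadd (oscale a (lcr eps)) (oscale a^-1 (lann (op eps))))
         (oadd (oscale a^-1 (lcr (op eps))) (oscale a (lann eps))).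

Definition Xdir (eps : E) : oper := ocomp (pl (s eps)) (ocomp (Xe eps) (pl (t eps))).

Definition revw (w : seq E) : seq E := rev (map op w).

(* modular conjugation J (antilinear):
   J gamma = gamma,
   J (eps_1..eps_n) = sqrt(mu(t eps_n)/mu(s eps_1)) eps_n^op..eps_1^op.
   Coefficient of the basis element q in J f is conj(f_b) c_b with b = rev q. *)
Definition Jc (w : seq E) : R :=
  if w is e :: r then Num.sqrt (mu (t (last e r)) / mu (s e)) else 1.

Definition J : oper := fun f b =>
  match b with
  | inl v => (f (inl v))^*
  | inr p => let w := revw ((val p).1 :: (val p).2) in
             (coefP f w)^* * (Jc w)%:C
  end.

Definition Jconj (A : oper) : oper := ocomp J (ocomp A J).

Definition adjV : rel V := fun x y => [exists e, (s e == x) && (t e == y)].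
Definition graph_connected : Prop := forall x y : V, connect adjV x y.

End Fock.

(* Main.v *)
Require Import Defs.
From mathcomp Require Import all_boot all_order all_algebra.
From mathcomp Require Import reals complex boolp.
From mathcomp Require Import ring.
Import Order.TTheory GRing.Theory Num.Theory.
Local Open Scope ring_scope.
Local Open Scope complex_scope.

Section Sc. Variable R : realType.
Lemma root4_4 (x : R) : 0 <= x -> root4 x ^+ 4 = x.
Proof.
move=> hx; rewrite /root4 -[4%N]/(2 * 2)%N exprM sqr_sqrtr ?sqrtr_ge0 //.
by rewrite sqr_sqrtr.
Qed.

Lemma sqrt_4 (x : R) : 0 <= x -> Num.sqrt x ^+ 4 = x ^+ 2.
Proof. by move=> hx; rewrite -[4%N]/(2 * 2)%N exprM sqr_sqrtr. Qed.

Lemma root4_ge0 (x : R) : 0 <= root4 x.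
Proof. exact: sqrtr_ge0. Qed.

Lemma scal (x y : R) : 0 < x -> 0 < y ->
  (root4 (x / y))^-1 * Num.sqrt (y / x) = (root4 (x ^+ 3 * y))^-1 * y.
Proof.
move=> hx hy; apply/eqP; rewrite -(@eqrXn2 _ 4) //; last first.
- by rewrite mulr_ge0 ?invr_ge0 ?root4_ge0 ?ltW.
- by rewrite mulr_ge0 ?invr_ge0 ?root4_ge0 ?sqrtr_ge0.
have h1 : 0 <= x / y by rewrite divr_ge0 ?ltW.
have h2 : 0 <= y / x by rewrite divr_ge0 ?ltW.
have h3 : 0 <= x ^+ 3 * y by rewrite mulr_ge0 ?exprn_ge0 ?ltW.
rewrite !exprMn !exprVn (root4_4 _ h1) (root4_4 _ h3) (sqrt_4 _ h2).
have hx0 : x != 0 by rewrite gt_eqF.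
have hy0 : y != 0 by rewrite gt_eqF.
apply/eqP; field.
by rewrite hx0 hy0.
Qed.

Lemma scal2 (x y : R) : 0 < y -> x = y ->
  Num.sqrt (y / x) = (root4 (x ^+ 3 * y))^-1 * y.
Proof.
move=> hy ->; rewrite divff ?gt_eqF // sqrtr1.
have h3 : 0 <= y ^+ 3 * y by rewrite mulr_ge0 ?exprn_ge0 ?ltW.
rewrite -exprSr (_ : y ^+ 4 = (y ^+ 2) ^+ 2); last by rewrite -exprM.
rewrite /root4 sqrtr_sqr ger0_norm ?exprn_ge0 ?ltW // sqrtr_sqr ger0_norm ?ltW //.
by rewrite mulVf ?gt_eqF.
Qed.
End Sc.

Section Pf.
Variables (R : realType) (V E : finType) (s t : E -> V) (op : E -> E)
          (mu : V -> R).
Hypotheses (mu_pos : forall v, 0 < mu v) (op_inv : involutive op)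
    (s_op : forall e, s (op e) = t e)
    (t_op : forall e, t (op e) = s e)
    (op_fix : forall e, (op e == e) = (s e == t e)).

Local Notation C := R[i].
Local Notation vec := (vec R s t).
Local Notation L := (@lcr R V E s t).
Local Notation A := (@lann R V E s t).
Local Notation P := (@pl R V E s t).
Local Notation Jm := (@J R V E s t op mu).
Local Notation cP := (@coefP R V E s t).
Local Notation W := (@coefW R V E s t).
Local Notation pw := (@is_pathw V E s t).
Local Notation jc := (@Jc R V E s t mu).
Local Notation rw := (@revw E op).
Local Notation cj := (@conjc (reals_Real__to__GRing_PzRing R)).

Lemma cjM (x y : C) : cj (x * y) = cj x * cj y.
Proof. exact: rmorphM. Qed.
Lemma cjD (x y : C) : cj (x + y) = cj x + cj y.
Proof. exact: rmorphD. Qed.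
Lemma cj0 : cj 0 = 0.
Proof. exact: rmorph0. Qed.
Lemma rcM (x y : R) : x%:C * y%:C = (x * y)%:C :> C.
Proof. by rewrite rmorphM. Qed.
Lemma NcjE (x : C) : Num.conj x = cj x.
Proof. by []. Qed.
Lemma cjK (x : C) : cj (cj x) = x.
Proof. exact: conjcK. Qed.
Lemma cjR (x : R) : cj (x%:C) = x%:C.
Proof. exact: conjc_real. Qed.

Lemma pw_revw u : pw (rw u) = pw u.
Proof.
rewrite /is_pathw /revw rev_sorted sorted_map.
case: u => // e r /=; apply: eq_path => x y /=.
by rewrite s_op t_op eq_sym.
Qed.

Lemma rwK u : rw (rw u) = u.
Proof. by rewrite /revw map_rev revK -map_comp map_id_in // => x _ /=; rewrite op_inv. Qed.

Lemma rw_rcons u x : rw (rcons u x) = op x :: rw u.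
Proof. by rewrite /revw map_rcons rev_rcons. Qed.

Lemma rw_cons e u : rw (e :: u) = rcons (rw u) (op e).
Proof. by rewrite /revw /= rev_cons. Qed.

Lemma cP_nil f : cP f [::] = 0. Proof. by []. Qed.

Lemma cP_npath f u : ~~ pw u -> cP f u = 0.
Proof.
case: u => // e r H; rewrite /coefP; case: insubP => // q Hq _.
by case/negP: H; exact: Hq.
Qed.

Lemma cP_val f (p : paths s t) : cP f ((val p).1 :: (val p).2) = f (inr p).
Proof.
rewrite /coefP; case: insubP => [q _ Eq|].
  congr (f (inr _)); apply: val_inj; rewrite Eq; by case: (val p).
by move/negP; case; exact: (valP p).
Qed.

Lemma cPJ f u : cP (Jm f) u = cj (cP f (rw u)) * (jc (rw u))%:C.
Proof.
case: u => [|e r]; first by rewrite (_ : rw [::] = [::]) // !cP_nil cj0 mul0r.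
rewrite {1}/coefP; case: insubP => [q _ Eq|nH].
  by rewrite /J Eq.
rewrite cP_npath ?cj0 ?mul0r // pw_revw; exact: nH.
Qed.

Lemma cPL d f u : cP (L d f) u =
  if u is e :: r then (if pw u && (e == d) then W f (t d) r else 0) else 0.
Proof.
case: u => [|e r] //.
rewrite {1}/coefP; case: insubP => [q Hq Eq|nH].
  by rewrite /lcr Eq /=; move: Hq => /= ->.
by rewrite (negbTE nH).
Qed.

Lemma cPA d f u : cP (A d f) u =
  if u is e :: r then (if pw u then cP f (d :: u) else 0) else 0.
Proof.
case: u => [|e r] //.
rewrite {1}/coefP; case: insubP => [q Hq Eq|nH].
  by rewrite /lann Eq /=; move: Hq => /= ->.
by rewrite (negbTE nH).
Qed.

Lemma cPP a f u : cP (P a f) u =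
  if u is e :: r then (if s e == a then cP f u else 0) else 0.
Proof.
case: u => [|e r] //.
rewrite {1}/coefP; case: insubP => [q Hq Eq|nH].
  have E1 : sval q = (e, r) := Eq. by rewrite /pl /= -cP_val E1 Eq.
by rewrite cP_npath // if_same.
Qed.

Lemma cP_add (f g : vec) u : cP (fun b => f b + g b) u = cP f u + cP g u.
Proof. by case: u => [|e r]; rewrite /coefP ?addr0 //; case: insub; rewrite ?addr0. Qed.

Lemma cP_scale (c : C) (f : vec) u : cP (fun b => c * f b) u = c * cP f u.
Proof. by case: u => [|e r]; rewrite /coefP ?mulr0 //; case: insub; rewrite ?mulr0. Qed.


Lemma rw_head e r : rw (e :: r) = op (last e r) :: rw (belast e r).
Proof. by rewrite lastI rw_rcons. Qed.

Lemma last_rw_belast e r : last (op (last e r)) (rw (belast e r)) = op e.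
Proof. by case: r => [|y r] //=; rewrite rw_cons last_rcons. Qed.

Lemma sqrt_ratio (a b c : V) :
  Num.sqrt (mu a / mu b) * Num.sqrt (mu b / mu c) = Num.sqrt (mu a / mu c).
Proof.
have ha := mu_pos a; have hb := mu_pos b; have hc := mu_pos c.
rewrite -sqrtrM; last exact: divr_ge0 (ltW ha) (ltW hb).
by rewrite mulrA divfK // gt_eqF.
Qed.

Lemma sqrt_ratio1 (a : V) : Num.sqrt (mu a / mu a) = 1.
Proof. by rewrite divff ?sqrtr1 // gt_eqF. Qed.

Lemma jc_cons e r : jc (e :: r) = Num.sqrt (mu (t (last e r)) / mu (s e)).
Proof. by []. Qed.

Lemma jc_rw e r : jc (rw (e :: r)) = Num.sqrt (mu (s e) / mu (t (last e r))).
Proof. by rewrite rw_head jc_cons last_rw_belast t_op s_op. Qed.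

Lemma jc_jcrw u : u != [::] -> jc u * jc (rw u) = 1.
Proof. by case: u => // e r _; rewrite jc_rw jc_cons sqrt_ratio sqrt_ratio1. Qed.

Lemma cPJrw f u : cj (cP (Jm f) (rw u)) = cP f u * (jc u)%:C.
Proof.
rewrite cPJ rwK cjM cjK cjR.
by case: u => [|e r]; rewrite ?cP_nil ?mul0r // .
Qed.

Lemma W_ne f v u : u != [::] -> W f v u = cP f u.
Proof. by case: u. Qed.

Lemma WJrw f v u : cj (W (Jm f) v (rw u)) = W f v u * (jc u)%:C.
Proof.
case: u => [|e r]; first by rewrite /= cjK mulr1.
by rewrite !W_ne ?cPJrw // rw_head.
Qed.

Lemma JJ (f : vec) : Jm (Jm f) = f.
Proof.
apply: funext => -[v|p] /=; first exact: cjK.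
by rewrite NcjE cPJrw cP_val -mulrA rcM jc_jcrw // mulr1.
Qed.

Local Notation Jcj := (@Jconj R V E s t op mu).

Lemma J_add (f g : vec) : Jm (fun b => f b + g b) = fun b => Jm f b + Jm g b.
Proof.
apply: funext => -[v|p] /=; first exact: cjD.
by rewrite !NcjE cP_add cjD mulrDl.
Qed.

Lemma J_scale (c : C) (f : vec) : Jm (fun b => c * f b) = fun b => cj c * Jm f b.
Proof.
apply: funext => -[v|p] /=; first exact: cjM.
by rewrite !NcjE cP_scale cjM mulrA.
Qed.

Lemma Jcj_comp (X Y : oper R s t) f : Jcj (ocomp X Y) f = Jcj X (Jcj Y f).
Proof. by rewrite /Jconj /ocomp JJ. Qed.

Lemma Jcj_add (X Y : oper R s t) f : Jcj (oadd X Y) f = fun b => Jcj X f b + Jcj Y f b.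
Proof. by rewrite /Jconj /ocomp /oadd J_add. Qed.

Lemma Jcj_scale (c : C) (X : oper R s t) f : Jcj (oscale c X) f = fun b => cj c * Jcj X f b.
Proof. by rewrite /Jconj /ocomp /oscale J_scale. Qed.

Definition RP (a : V) (f : vec) : vec := fun b => if bend b == a then f b else 0.

Lemma Jcj_P a f : Jcj (P a) f = RP a f.
Proof.
apply: funext => -[v|p]; rewrite /Jconj /ocomp /RP /=.
  by rewrite /pl /=; case: ifP => _; rewrite ?cjK ?cj0.
case: p => [[e r] Hp] /=.
rewrite NcjE rw_head cPP -rw_head s_op.
by case: ifP => _; rewrite ?cj0 ?mul0r // -(cP_val f) cPJrw -mulrA rcM jc_jcrw // mulr1.
Qed.

Lemma cPRP a f u : cP (RP a f) u =
  if u is e :: r then (if t (last e r) == a then cP f u else 0) else 0.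
Proof.
case: u => [|e r] //.
rewrite {1}/coefP; case: insubP => [q Hq Eq|nH].
  have E1 : sval q = (e, r) := Eq. by rewrite /RP /= -cP_val E1 Eq.
by rewrite cP_npath // if_same.
Qed.

Lemma L_RP d a f : L d (RP a f) = RP a (L d f).
Proof.
apply: funext => -[v|p]; rewrite /RP /=; first by case: ifP.
case: p => [[e r] Hp] /=.
case: (e =P d) => [->|]; last by case: ifP.
case: r Hp => [|y r] Hp /=; first by [].
exact: (cPRP a f (y :: r)).
Qed.

Lemma L_add d (f g : vec) b : L d (fun b => f b + g b) b = L d f b + L d g b.
Proof.
case: b => [v|[[e r] Hp]] /=; first by rewrite addr0.
case: ifP => _; last by rewrite addr0.
by case: r Hp => [|y r] Hp //; exact: cP_add.
Qed.

Lemma L_scale d (c : C) (f : vec) b : L d (fun b => c * f b) b = c * L d f b.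
Proof.
case: b => [v|[[e r] Hp]] /=; first by rewrite mulr0.
case: ifP => _; last by rewrite mulr0.
by case: r Hp => [|y r] Hp //; exact: cP_scale.
Qed.

Lemma pw_cons e r : pw (e :: r) -> pw r.
Proof. by case: r => //= y r /andP[]. Qed.

Lemma pw_rcons u x : pw (rcons u x) -> pw u.
Proof. by case: u => //= e r; rewrite /is_pathw /= rcons_path => /andP[]. Qed.

Lemma cP_ex f e r (Hp : pw (e :: r)) :
  f (inr (exist (fun p : E * seq E => pw (p.1 :: p.2)) (e, r) Hp)) = cP f (e :: r).
Proof. exact: (esym (cP_val f (exist _ (e, r) Hp))). Qed.

Lemma W_cons f v e r : W f v (e :: r) = cP f (e :: r).
Proof. by []. Qed.

Lemma W_nil f v : W f v [::] = f (inl v).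
Proof. by []. Qed.

Arguments pw_cons {e r}.
Arguments pw_rcons {u x}.

Lemma rcons_nnil (u : seq E) x : rcons u x != [::].
Proof. by case: u. Qed.

Local Notation RA d := (Jcj (L d)).
Local Notation RR d := (Jcj (A d)).

Lemma cP_RA d g u x : cP (RA d g) (rcons u x) =
  if pw (rcons u x) && (op x == d) then W g (t d) u * (jc u * jc (rw (rcons u x)))%:C else 0.
Proof.
rewrite /Jconj /ocomp cPJ rw_rcons cPL -rw_rcons pw_revw.
case: ifP => _; last by rewrite cj0 mul0r.
by rewrite rw_rcons WJrw -rw_rcons -mulrA rcM.
Qed.

Lemma RA_inl d g v : RA d g (inl v) = 0.
Proof. exact: cj0. Qed.

Lemma commRA ep d g b : L ep (RA d g) b = RA d (L ep g) b.
Proof.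
case: b => [v|[[e r] Hp]]; first by rewrite RA_inl.
rewrite (cP_ex (L ep (RA d g))) (cP_ex (RA d (L ep g))).
rewrite cPL Hp andTb; case: eqP => [Ee|ne]; last first.
  case/lastP: r Hp => [|r0 x] Hp.
    rewrite -[[:: e]]/(rcons [::] e) cP_RA; case: ifP => // _; by rewrite /= mul0r.
  rewrite -rcons_cons cP_RA; case: ifP => // _; rewrite W_cons cPL.
  by case: ifP => [/andP[_ /eqP //]|_]; rewrite mul0r.
subst e.
case/lastP: r Hp => [|r0 x] Hp.
  rewrite W_nil RA_inl -[[:: ep]]/(rcons [::] ep) cP_RA; case: ifP => // _; by rewrite W_nil /= mul0r.
rewrite W_ne ?rcons_nnil // cP_RA -rcons_cons cP_RA.
have Hp1 : pw (rcons (ep :: r0) x) := Hp.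
have Hp2 := pw_rcons Hp1.
have Hp3 := pw_cons Hp.
rewrite Hp1 Hp3 !andTb W_cons cPL Hp2 eqxx andTb.
case: (op x =P d) => [Hx|_]; last by [].
case: r0 Hp Hp1 Hp2 Hp3 => [|y r0] Hp Hp1 Hp2 Hp3.
  move: Hp; rewrite /= /is_pathw /= andbT => /eqP Htx.
  rewrite /= -Hx !t_op !s_op mul1r Htx.
  by rewrite sqrt_ratio.
rewrite /= !jc_rw /= !last_rcons.
by rewrite !sqrt_ratio.
Qed.

Lemma cP_RR d g u : cP (RR d g) u =
  if u is _ :: _ then
    (if pw u then cP g (rcons u (op d)) * (jc (rcons u (op d)) * jc (rw u))%:C else 0)
  else 0.
Proof.
case: u => [|e r] //.
rewrite /Jconj /ocomp cPJ rw_head cPA -rw_head pw_revw.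
case: ifP => _; last by rewrite cj0 mul0r.
have -> : d :: rw (e :: r) = rw (rcons (e :: r) (op d)) by rewrite rw_rcons op_inv.
by rewrite cPJrw -mulrA rcM.
Qed.

Lemma RR_inl d g v : RR d g (inl v) =
  if v == t d then cP g [:: op d] * (jc [:: op d])%:C else 0.
Proof.
rewrite /Jconj /ocomp /J /lann.
case: ifP => _; last exact: cj0.
have -> : [:: d] = rw [:: op d] by rewrite /revw /= op_inv.
exact: cPJrw.
Qed.

Lemma commRR ep d g b : L ep (RR d g) b - RR d (L ep g) b =
  if (b == inl (t d)) && (op d == ep) then - (g (inl (t ep)) * (jc [:: op d])%:C) else 0.
Proof.
case: b => [v|[[e r] Hp]].
  rewrite RR_inl (_ : L ep _ (inl v) = 0) // cPL.
  have -> : (inl v == inl (t d) :> basis s t) = (v == t d) by apply/eqP/eqP => [[]|->].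
  case: (v == t d); last by rewrite subr0.
  rewrite (_ : pw [:: op d] = true) // andTb W_nil.
  by case: (op d == ep); rewrite ?add0r ?mul0r ?oppr0.
have -> : (inr (exist (fun p : E * seq E => pw (p.1 :: p.2)) (e, r) Hp) == inl (t d)) = false by [].
rewrite andFb (cP_ex (L ep (RR d g))) (cP_ex (RR d (L ep g))).
apply/eqP; rewrite subr_eq0; apply/eqP.
rewrite cPL Hp andTb cP_RR Hp rcons_cons cPL -rcons_cons.
case: eqP => [Ee|ne]; last by case: (pw _); rewrite /= mul0r.
subst e; rewrite andbT.
case: r Hp => [|y r] Hp.
  rewrite W_nil RR_inl /= andbT.
  case: (t ep =P t d) => [Htd|ntd].
    by rewrite s_op Htd eqxx !t_op !s_op Htd sqrt_ratio.
  by rewrite (_ : (t ep == s (op d)) = false) ?mul0r // s_op; apply/eqP.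
rewrite W_cons cP_RR (pw_cons Hp).
have Hp' : pw (ep :: rcons (y :: r) (op d)) = pw (rcons (y :: r) (op d)).
  by rewrite /is_pathw /= rcons_path /= -rcons_path; move: Hp => /= /andP[-> _].
rewrite Hp'; case: ifP => Hq; last by rewrite !cP_npath ?Hq ?mul0r.
rewrite rcons_cons W_cons -rcons_cons; congr (_ * _%:C).
by rewrite /= !jc_rw /= !sqrt_ratio.
Qed.

Definition DD ep (X : oper R s t) (h : vec) b := L ep (Jcj X h) b - Jcj X (L ep h) b.

Lemma DD_add ep X Y h b : DD ep (oadd X Y) h b = DD ep X h b + DD ep Y h b.
Proof. by rewrite /DD !Jcj_add L_add opprD addrACA. Qed.

Lemma DD_scale ep c X h b : DD ep (oscale c X) h b = cj c * DD ep X h b.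
Proof. by rewrite /DD !Jcj_scale L_scale -mulrBr. Qed.

Lemma DD_L ep d h b : DD ep (L d) h b = 0.
Proof. by rewrite /DD commRA subrr. Qed.

Lemma DD_A ep d h b : DD ep (A d) h b =
  if (b == inl (t d)) && (op d == ep) then - (h (inl (t ep)) * (jc [:: op d])%:C) else 0.
Proof. exact: commRR. Qed.

Lemma comm_eq ep ep' f b :
  comm (L ep) (Jcj (Xdir op mu ep')) f b =
  if bend b == s ep' then DD ep (Xe op mu ep') (RP (t ep') f) b else 0.
Proof.
rewrite /comm /Xdir.
rewrite (Jcj_comp (P (s ep'))) (Jcj_comp (Xe op mu ep')).
rewrite (Jcj_comp (P (s ep'))) (Jcj_comp (Xe op mu ep')).
rewrite !Jcj_P (L_RP ep (s ep')) -(L_RP ep (t ep')) /RP /DD.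
by case: ifP => _; rewrite ?subrr.
Qed.

Lemma cjVR (x : R) : cj ((x%:C)^-1) = (x^-1)%:C.
Proof. by rewrite -fmorphV cjR. Qed.

Lemma eq_inl (v w : V) : (inl v == inl w :> basis s t) = (v == w).
Proof. by apply/eqP/eqP => [[]|->]. Qed.

Lemma part1 ep f :
  comm (L ep) (Jcj (Xdir op mu ep)) f =
  (fun b => - ((root4 (mu (s ep) ^+ 3 * mu (t ep)))^-1)%:C
            * rank1 mu (bvec R (inl (s ep))) (inl (t ep)) f b).
Proof.
apply: funext => b; rewrite comm_eq /rank1 /bvec /inner_basis /norm2 /=.
have [Hl|Hl] := eqVneq (op ep) ep.
  have Hst : s ep = t ep by apply/eqP; rewrite -op_fix Hl.
  rewrite /Xe Hl eqxx DD_add DD_L DD_A add0r Hl eqxx andbT Hst.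
  case: (b =P inl (t ep)) => [->|nb]; last first.
    by case: ifP; rewrite mul0r mulr0.
  rewrite /= eqxx /RP /= eqxx mul1r (@scal2 R _ _ (mu_pos (t ep)) (congr1 mu Hst)) Hst.
  rewrite -rcM; ring.
have Hst : (s ep == t ep) = false by rewrite -op_fix (negbTE Hl).
rewrite /Xe (negbTE Hl) !DD_add !DD_scale !DD_L !DD_A op_inv eqxx !andbT (negbTE Hl) andbF.
rewrite !mulr0 t_op.
case: (b =P inl (s ep)) => [->|nb]; last first.
  by case: ifP; rewrite ?mulr0 ?addr0 ?add0r ?mul0r ?mulr0.
rewrite [bend _]/= eqxx /RP [bend _]/= eqxx mul1r cjVR.
have E1 : ((a_coef s t mu ep)^-1)%:C * (Num.sqrt (mu (t ep) / mu (s ep)))%:C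
        = ((root4 (mu (s ep) ^+ 3 * mu (t ep)))^-1)%:C * (mu (t ep))%:C.
  by rewrite !rcM /a_coef (@scal R _ _ (mu_pos _) (mu_pos _)).
transitivity (- (((a_coef s t mu ep)^-1)%:C * (Num.sqrt (mu (t ep) / mu (s ep)))%:C
   * f (inl (t ep)))); first ring.
rewrite E1; ring.
Qed.

Lemma part2 ep ep' f : ep' != ep ->
  comm (L ep) (Jcj (Xdir op mu ep')) f = (fun _ => 0).
Proof.
move=> ne; apply: funext => b; rewrite comm_eq.
have [Hl|Hl] := eqVneq (op ep') ep'.
  rewrite /Xe Hl eqxx DD_add DD_L DD_A add0r Hl (negbTE ne) andbF.
  by case: ifP.
have Hst : (s ep' == t ep') = false by rewrite -op_fix (negbTE Hl).
rewrite /Xe (negbTE Hl) !DD_add !DD_scale !DD_L !DD_A op_inv (negbTE ne) andbF.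
rewrite !mulr0 ?add0r ?addr0.
case: (b =P inl (t ep')) => [->|nb].
  by rewrite /= eq_sym Hst.
by rewrite andFb mulr0; case: ifP.
Qed.

End Pf.

Theorem lemma3p4 (R : realType) (V E : finType) (s t : E -> V) (op : E -> E)
    (mu : V -> R)
    (mu_pos : forall v, 0 < mu v)
    (op_inv : involutive op)
    (s_op : forall e, s (op e) = t e)
    (t_op : forall e, t (op e) = s e)
    (op_fix : forall e, (op e == e) = (s e == t e))
    (conn : graph_connected s t)
    (eps : E) :
  (forall f : vec R s t,
     comm (@lcr R V E s t eps) (Jconj op mu (Xdir op mu eps)) f
     = (fun b => - ((root4 (mu (s eps) ^+ 3 * mu (t eps)))^-1)%:C
                 * rank1 mu (bvec R (inl (s eps))) (inl (t eps)) f b))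
  /\
  (forall eps' : E, eps' != eps -> forall f : vec R s t,
     comm (@lcr R V E s t eps) (Jconj op mu (Xdir op mu eps')) f = (fun _ => 0)).
Proof.
split.
  by move=> f; apply: part1.
by move=> eps' ne f; apply: part2.
Qed.
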